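(* Let $d\ge 2$, $n\ge d+2$, and let $\mathcal{F}$, $B_i$, $\mathcal{X}_v$ be as in the context. For every $v\in[n]$, the family $\mathcal{X}_v\subseteq\binom{[n]\setminus\{v\}}{d}$ has VC-dimension at most $d-1$; consequently $|\mathcal{X}_v|\le\binom{n-1}{d-1}$.
   Context: Let $\mathcal{F}=\{F_1,\dots,F_m\}\subseteq\binom{[n]}{d+1}$ consist of distinct sets and have VC-dimension at most $d$ (no $(d+1)$-set $S$ is shattered, i.e. no $S$ such that every $A\subseteq S$ equals $F\cap S$ for some $F\in\mathcal{F}$). For $i\in[m]$, call $B\subsetneq F_i$ admissible for $F_i$ if $F\cap F_i\neq B$ for every $F\in\mathcal{F}$ (admissible sets exist by the VC-dimension assumption). For each $i$, $B_i$ is a fixed admissible set for $F_i$ of maximum cardinality among all admissible sets for $F_i$. For $v\in[n]$, $\mathcal{X}_v:=\{F_k\setminus\{v\}: k\in[m],\ v\in B_k\}$. *)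

(* Defs.v *)
From mathcomp Require Import all_boot.
Set Implicit Arguments. Unset Strict Implicit. Unset Printing Implicit Defensive.

Definition shatters (T : finType) (Fam : {set {set T}}) (S : {set T}) : Prop :=
  forall A : {set T}, A \subset S -> exists2 F, F \in Fam & F :&: S = A.

Definition vc_dim_le (T : finType) (Fam : {set {set T}}) (k : nat) : Prop :=
  forall S : {set T}, #|S| = k.+1 -> ~ shatters Fam S.

Definition admissible (n m : nat) (F : 'I_m -> {set 'I_n}) (i : 'I_m)
    (B : {set 'I_n}) : Prop :=
  B \proper F i /\ forall k : 'I_m, F k :&: F i != B.

Definition Xfam (n m : nat) (F B : 'I_m -> {set 'I_n}) (v : 'I_n)
    : {set {set 'I_n}} :=
  [set F k :\ v | k in [set k : 'I_m | v \in B k]].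

(* Main.v *)
Require Import Defs.
From mathcomp Require Import all_boot all_algebra zify.
Set Implicit Arguments. Unset Strict Implicit. Unset Printing Implicit Defensive.
Import GRing.Theory Num.Theory.
Local Open Scope ring_scope.

Lemma lin_dep (m n : nat) (M : 'M[rat]_(m,n)) : (n < m)%N ->
  exists2 u : 'rV_m, u != 0 & u *m M = 0.
Proof.
move=> ltnm.
have : kermx M != 0.
  rewrite -mxrank_eq0 mxrank_ker subn_eq0 -ltnNge.
  exact: leq_ltn_trans (rank_leq_col M) ltnm.
case: (pickP (fun i => row i (kermx M) != 0)) => [i Hi _ | H].
  by exists (row i (kermx M)) => //; rewrite -row_mul mulmx_ker row0.
move=> /eqP[]; apply/row_matrixP => i; rewrite row0.
by move: (H i) => /negbFE/eqP.
Qed.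

Lemma stepL (T : finType) (Fam Cs : {set {set T}}) :
  (#|Cs| < #|Fam|)%N ->
  exists f : {set T} -> rat, (exists2 F0, F0 \in Fam & f F0 != 0) /\
    forall G, G \in Cs -> \sum_(F in Fam) f F * (G \subset F)%:R = 0.
Proof.
move=> lt.
pose M := \matrix_(i < #|Fam|, j < #|Cs|)
   ((@enum_val _ (mem Cs) j) \subset (@enum_val _ (mem Fam) i))%:R : 'M[rat]_(#|Fam|, #|Cs|).
have [u u0 uM] := lin_dep M lt.
pose f F := \sum_(i | @enum_val _ (mem Fam) i == F) u 0 i.
have fE : forall i, f (enum_val i) = u 0 i.
  by move=> i; rewrite /f (big_pred1 i) // => j /=; apply/eqP/eqP => [/enum_val_inj|->].
exists f; split.
  have [i0 Hi0] : exists i, u 0 i != 0.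
    apply/existsP; move: u0; apply: contraR => /existsPn H.
    by apply/eqP/rowP => i; rewrite mxE; apply/eqP; move: (H i) => /negbNE.
  by exists (enum_val i0); [exact: enum_valP | rewrite fE].
move=> G GC.
pose j : 'I_#|Cs| := enum_rank_in GC G.
have E : (u *m M) 0 j = 0 by rewrite uM mxE.
rewrite -[RHS]E mxE (partition_big (@enum_val _ (mem Fam)) (mem Fam)) /=; last first.
  by move=> i _; exact: enum_valP.

apply: eq_bigr => F FF; rewrite /f big_distrl /=; apply: eq_bigr => i /eqP <-.
by rewrite mxE /j enum_rankK_in.
Qed.
Lemma sum_bool (T : finType) (A : {set T}) (P : pred T) :
  \sum_(x in A) ((P x)%:R : rat) = #|[set x in A | P x]|%:R.
Proof.
have -> : (#|[set x in A | P x]|%:R : rat) = \sum_(x in [set x in A | P x]) 1.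
  by rewrite sumr_const.
rewrite big_mkcond [RHS]big_mkcond /=.
by apply: eq_bigr => x _; rewrite inE; case: (x \in A); case: (P x).
Qed.

Lemma stepD (T : finType) (U : {set T}) (k : nat) (Fam : {set {set T}}) (f : {set T} -> rat):
  (forall X, X \in Fam -> X \subset U /\ #|X| = k) ->
  (forall G : {set T}, G \subset U -> #|G| = k.-1 -> \sum_(F in Fam) f F * (G \subset F)%:R = 0) ->
  forall G : {set T}, G \subset U -> (#|G| < k)%N -> \sum_(F in Fam) f F * (G \subset F)%:R = 0.
Proof.
move=> HF H0.
suff: forall s (G : {set T}), G \subset U -> (#|G| + s)%N = k.-1 ->
        \sum_(F in Fam) f F * (G \subset F)%:R = 0.
  move=> H G GU Gk; apply: (H (k.-1 - #|G|)%N) => //; rewrite subnKC //.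
  by rewrite -ltnS (ltn_predK Gk).
elim=> [|s IH] G GU Gs; first by apply: H0 => //; rewrite -Gs addn0.
have E : \sum_(x in U :\: G) \sum_(F in Fam) f F * ((x |: G) \subset F)%:R = 0.
  apply: big1 => x; rewrite inE => /andP[xG xU]; apply: IH.
    by rewrite subUset sub1set xU GU.
  by rewrite cardsU1 xG add1n addSnnS.
rewrite exchange_big /= in E.
have E2 : forall F, F \in Fam ->
    \sum_(x in U :\: G) f F * ((x |: G) \subset F)%:R =
    (k - #|G|)%:R * (f F * (G \subset F)%:R).
  move=> F FF; rewrite -mulr_sumr.
  under eq_bigr => x _ do rewrite subUset sub1set.
  case GF: (G \subset F).
    under eq_bigr => x _ do rewrite andbT.
    rewrite sum_bool.
    have -> : [set x in U :\: G | x \in F] = F :\: G.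
      apply/setP => x; rewrite !inE; case: (x \in G) => //=.
      case xF: (x \in F); rewrite ?andbF ?andbT //.
      by have [/subsetP FU _] := HF F FF; rewrite FU.
    rewrite cardsD (setIidPr GF); have [_ ->] := HF F FF.
    by rewrite mulr1 mulrC.
  under eq_bigr => x _ do rewrite andbF.
  by rewrite big1 // !mulr0.
rewrite (eq_bigr _ E2) -mulr_sumr in E.
move/eqP: E; rewrite mulf_eq0 pnatr_eq0 => /orP[|/eqP //].
rewrite subn_eq0 => kG; have := leq_pred k; rewrite -Gs; lia.
Qed.
Lemma alt_sum (T : finType) (A F0 : {set T}) : A \proper F0 ->
  \sum_(B : {set T} | (A \subset B) && (B \subset F0)) ((-1) ^+ #|F0 :\: B| : rat) = 0.
Proof.
case/properP => AF0 [x xF0 xA].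
rewrite (bigID (fun B : {set T} => x \in B)) /=.
rewrite (reindex_onto (fun B : {set T} => x |: B) (fun B : {set T} => B :\ x)) /=; last first.
  by move=> B /andP[_ xB]; rewrite setD1K.
have C : forall j : {set T}, (A \subset x |: j) && (x |: j \subset F0) && (x \in x |: j) &&
            ((x |: j) :\ x == j) = (A \subset j) && (j \subset F0) && (x \notin j).
  move=> j; case xj: (x \in j) => /=.
    rewrite andbF; apply/negbTE; apply/negP => /andP[_ /eqP/setP/(_ x)].
    by rewrite !inE eqxx xj.
  rewrite setU1K ?xj // eqxx setU11 !andbT subUset sub1set xF0 /=.
  congr andb; apply/idP/idP => H; last exact: subset_trans H (subsetUr _ _).
  apply/subsetP => y yA; have := subsetP H y yA; rewrite !inE.
  by case: eqP => // yx; move: yA; rewrite yx (negbTE xA).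
rewrite (eq_bigl _ _ C) -big_split /=; apply: big1 => j /andP[/andP[Aj jF0] xj].
have -> : #|F0 :\: j| = #|F0 :\: (x |: j)|.+1.
  have -> : F0 :\: j = x |: (F0 :\: (x |: j)).
    apply/setP => y; rewrite !inE; case: (y =P x) => [->|] //=.
    by rewrite xF0 (negbTE xj).
  by rewrite cardsU1 !inE eqxx.
by rewrite exprS mulN1r addrN.
Qed.

Lemma sum_pick (T : finType) (P : pred {set T}) (B : {set T}) :
  \sum_(A : {set T} | P A) ((B == A)%:R : rat) = (P B)%:R.
Proof.
rewrite big_mkcond /= (bigD1 B) //= big1 ?addr0 => [|A /negbTE AB].
  by rewrite eqxx; case: (P B).
by rewrite eq_sym AB; case: (P A).
Qed.

Lemma stepE (T : finType) (U : {set T}) (k : nat) (Fam : {set {set T}})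
    (f : {set T} -> rat) (F0 : {set T}) :
  (forall X, X \in Fam -> X \subset U /\ #|X| = k) ->
  (forall G : {set T}, G \subset U -> (#|G| < k)%N ->
      \sum_(F in Fam) f F * (G \subset F)%:R = 0) ->
  F0 \in Fam -> f F0 != 0 -> shatters Fam F0.
Proof.
move=> HF HS F0F fF0.
have [F0U F0k] := HF F0 F0F.
pose g (A : {set T}) := \sum_(F in Fam) f F * (F :&: F0 == A)%:R.
have gF0 : g F0 = f F0.
  rewrite /g (bigD1 F0) //= setIid eqxx mulr1 big1 ?addr0 // => F /andP[FF FnF0].
  case E: (F :&: F0 == F0); last by rewrite mulr0.
  have [_ Fk] := HF F FF.
  move: FnF0; suff -> : F = F0 by rewrite eqxx.
  apply/eqP; rewrite eq_sym eqEcard Fk F0k leqnn andbT.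
  by rewrite -(eqP E) subsetIl.
have main : forall m (A : {set T}), A \subset F0 -> (#|F0 :\: A| <= m)%N ->
    g A = (-1) ^+ #|F0 :\: A| * f F0.
  elim=> [|m IH] A AF0 Am.
    have -> : A = F0.
      apply/eqP; rewrite eqEsubset AF0 /=; apply/subsetP => x xF0.
      move: Am; rewrite leqn0 cards_eq0 => /eqP/setP/(_ x).
      by rewrite !inE xF0 andbT => /negbFE.
    by rewrite gF0 setDv cards0 expr0 mul1r.
  case: (eqVneq A F0) => [->|AnF0].
    by rewrite gF0 setDv cards0 expr0 mul1r.
  have AF0p : A \proper F0 by rewrite properEneq AnF0.
  have SA : \sum_(F in Fam) f F * (A \subset F)%:R = 0.
    apply: HS; first exact: subset_trans AF0 F0U.
    by rewrite -F0k; apply: proper_card.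
  have SA2 : \sum_(F in Fam) f F * (A \subset F)%:R =
      \sum_(B : {set T} | (A \subset B) && (B \subset F0)) g B.
    rewrite /g exchange_big /=; apply: eq_bigr => F _.
    rewrite -mulr_sumr sum_pick subsetIr andbT subsetI AF0 andbT //.
  rewrite SA2 (bigD1 A) /= ?subxx ?AF0 // in SA.
  have E2 : \sum_(B : {set T} | (A \subset B) && (B \subset F0) && (B != A)) g B =
      \sum_(B : {set T} | (A \subset B) && (B \subset F0) && (B != A))
         (-1) ^+ #|F0 :\: B| * f F0.
    apply: eq_bigr => B /andP[/andP[AB BF0] BnA]; apply: IH => //.
    have AB' : A \proper B by rewrite properEneq eq_sym BnA.
    have := proper_card AB'.
    move: Am; rewrite !cardsD (setIidPr AF0) (setIidPr BF0).
    have := subset_leq_card BF0; lia.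
  rewrite E2 -mulr_suml in SA.
  have := alt_sum AF0p; rewrite (bigD1 A) /= ?subxx ?AF0 // => alt.
  have E3 : \sum_(B : {set T} | (A \subset B) && (B \subset F0) && (B != A))
         ((-1) ^+ #|F0 :\: B| : rat) = - (-1) ^+ #|F0 :\: A|.
    by apply/eqP; rewrite -addr_eq0 addrC alt.
  rewrite E3 in SA.
  by move/eqP: SA; rewrite mulNr addr_eq0 opprK => /eqP.
move=> A AF0.
have gA : g A != 0.
  rewrite (main _ A AF0 (leqnn _)) mulf_neq0 //.
  by rewrite expf_neq0 // oppr_eq0 oner_eq0.
case: (pickP (fun F => (F \in Fam) && (F :&: F0 == A))) => [F /andP[FF /eqP E] | none].
  by exists F.
move: gA; rewrite /g big1 ?eqxx // => F FF.
by move: (none F); rewrite FF /= => ->; rewrite mulr0.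
Qed.

Lemma frankl_pach (T : finType) (U : {set T}) (k : nat) (Fam : {set {set T}}) :
  (forall X, X \in Fam -> X \subset U /\ #|X| = k) ->
  (forall S : {set T}, #|S| = k -> ~ shatters Fam S) ->
  (#|Fam| <= 'C(#|U|, k.-1))%N.
Proof.
move=> HF HV; rewrite leqNgt; apply/negP => lt.
pose Cs := [set G : {set T} | G \subset U & #|G| == k.-1].
have : (#|Cs| < #|Fam|)%N by rewrite cards_draws.
case/stepL => f [[F0 F0F fF0] Hf].
have HS := @stepD T U k Fam f HF
  (fun G GU Gk => Hf G ltac:(by rewrite inE GU Gk eqxx)).
apply: (HV F0 (proj2 (HF F0 F0F))).
exact: stepE HF HS F0F fF0.
Qed.

Local Close Scope ring_scope.

Theorem claim3p3 (d n m : nat) (F B : 'I_m -> {set 'I_n}) :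
  2 <= d -> d + 2 <= n ->
  injective F ->
  (forall i, #|F i| = d.+1) ->
  vc_dim_le [set F i | i in 'I_m] d ->
  (forall i, admissible F i (B i)) ->
  (forall i (B' : {set 'I_n}), admissible F i B' -> #|B'| <= #|B i|) ->
  forall v : 'I_n,
    (forall X, X \in Xfam F B v -> #|X| = d /\ v \notin X) /\
    vc_dim_le (Xfam F B v) d.-1 /\
    #|Xfam F B v| <= 'C(n.-1, d.-1).
Proof.
move=> d2 dn Finj Fcard Fvc Badm Bmax v.
have vF : forall k, v \in B k -> v \in F k.
  move=> k vB; have [/proper_sub/subsetP BF _] := Badm k; exact: BF.
have P1 : forall X, X \in Xfam F B v -> #|X| = d /\ v \notin X.
  move=> X /imsetP[k]; rewrite inE => vB ->; split; last by rewrite !inE eqxx.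
  by have := cardsD1 v (F k); rewrite vF // Fcard add1n => -[].
have P2 : vc_dim_le (Xfam F B v) d.-1.
  move=> S; rewrite prednK ?(leq_trans _ d2) // => Sd Sh.
  have [X /imsetP[k]] := Sh S (subxx S); rewrite inE => vBk -> XS.
  have SFk : S = F k :\ v.
    apply/eqP; rewrite eqEcard -{1}XS subsetIl Sd /=.
    have XX : F k :\ v \in Xfam F B v by apply: imset_f; rewrite inE.
    by have [-> _] := P1 _ XX.
  have BS : B k :\ v \subset S.
    rewrite SFk; apply: setSD; by have [/proper_sub] := Badm k.
  have [X' /imsetP[j]] := Sh _ BS; rewrite inE => vBj -> XS'.
  have [_ /(_ j)/eqP] := Badm k; apply.
  apply/setP => x; have := congr1 (fun Y : {set 'I_n} => x \in Y) XS'; rewrite SFk !inE /=.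
  case: (x =P v) => [->|_] /=; last by [].
  by rewrite vF // vF.
split=> //; split=> //.
have := @frankl_pach _ [set~ v] d (Xfam F B v).
rewrite cardsC1 card_ord; apply.
  move=> X XX; have [Xd vX] := P1 X XX; split=> //.
  by apply/subsetP => y yX; rewrite !inE; apply: contraNneq vX => <-.
by move=> S Sd; apply: P2; rewrite prednK // (leq_trans _ d2).
Qed.
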